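(* Let $\mathbf{w}$ be an infinite overlap-free word over the alphabet $\{0,1\}$. Then there is a position $i$ such that no square (nonempty word of the form $xx$) occurs in $\mathbf{w}$ beginning at position $i$.
   Context: A finite word $w$ is an $\alpha$-power ($\alpha$ rational) if $w = x^n x'$ with $x'$ a prefix of $x$, $x$ nonempty, and $\alpha = n + |x'|/|x|$. A square is a $2$-power, i.e. a word $xx$ with $x$ nonempty. An overlap is a word that is a $\beta$-power for some $\beta > 2$. A (finite or infinite) word is overlap-free if none of its factors (contiguous subwords) is an overlap. *)

(* Defs.v *)
From mathcomp Require Import all_boot all_order all_algebra.
Set Implicit Arguments. Unset Strict Implicit. Unset Printing Implicit Defensive.
Import Order.TTheory GRing.Theory Num.Theory.

Definition wpow (T : eqType) (x : seq T) (n : nat) : seq T :=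
  flatten (nseq n x).

Definition is_power (T : eqType) (w : seq T) (alpha : rat) : Prop :=
  exists (x x' : seq T) (n : nat),
    [/\ x != [::], prefix x' x, w = wpow x n ++ x' &
        alpha = (n%:R + (size x')%:R / (size x)%:R)%R].

Definition is_overlap (T : eqType) (w : seq T) : Prop :=
  exists beta : rat, (2 < beta)%R /\ is_power w beta.

Definition factor (T : Type) (w : nat -> T) (i n : nat) : seq T :=
  mkseq (fun k => w (i + k)) n.

Definition overlap_free_inf (T : eqType) (w : nat -> T) : Prop :=
  forall i n, ~ is_overlap (factor w i n).

Definition square_at (T : eqType) (w : nat -> T) (i : nat) : Prop :=
  exists x : seq T, x != [::] /\ factor w i (2 * size x) = x ++ x.

(* Main.v *)
Require Import Defs.
From mathcomp Require Import all_boot all_order all_algebra.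
From mathcomp Require Import zify.
From Stdlib Require Import Classical.
Import Order.TTheory GRing.Theory Num.Theory.

Definition periodic (f : nat -> bool) i p :=
  forall k, k <= p -> f (k + i) = f (k + p + i).

Definition OF (f : nat -> bool) := forall i p, 0 < p -> ~ periodic f i p.

Lemma of_OF (w : nat -> bool) : overlap_free_inf w -> OF w.
Proof.
move=> H i p p0 Hp; apply: (H i (p + p + 1)).
exists (2%:R + 1%:R / p%:R)%R; split.
  by rewrite ltrDl divr_gt0 // ltr0n.
exists (factor w i p); exists [:: w i]; exists 2; split.
- by rewrite -size_eq0 size_mkseq -lt0n.
- rewrite /factor; case: p p0 {Hp} => // p _ /=.
  by rewrite addn0 eqxx; case: [seq _ | _ <- _].
- rewrite /wpow /= cats0 /factor /mkseq iotaD iotaD !map_cat -!catA.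
  congr (_ ++ _); congr (_ ++ _).
    rewrite add0n -{1}(addn0 p) iotaDl -map_comp; apply/eq_in_map => k.
    rewrite mem_iota add0n => /andP[_ kp] /=.
    have := Hp k (ltnW kp); rewrite (_ : i + (p+k) = k + p + i); last lia.
    by rewrite (addnC i k) => <-.
  rewrite add0n /=.
  have := Hp p (leqnn p); have := Hp 0 (leq0n p).
  by rewrite !add0n (addnC p i) (addnC _ i) => -> ->.
- by rewrite /factor size_mkseq.
Qed.

Lemma parity f : OF f -> forall e i, 0 < i -> f i = f i.+1 ->
  f (2 * e+1+i) = f (2 * e+1+i).+1 -> False.
Proof.
move=> Hf e; elim/ltn_ind: e => e IH i i0 Hi Hd.
case: (classic (exists m, i < m /\ m < 2 * e+1+i /\ f m = f m.+1)).
  move=> [m [im [me Hm]]].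
  have [b [Eb|Eb]] : exists b, m - i = 2 * b \/ m - i = 2 * b+1.
    by exists ((m - i) %/ 2); lia.
  - apply: (IH (e - b) _ m); [lia | lia | exact Hm | ].
    by rewrite (_ : 2 * (e - b) + 1 + m = 2 * e+1+i) //; lia.
  - apply: (IH b _ i); [lia | lia | exact Hi | ].
    by rewrite (_ : 2 * b + 1 + i = m) //; lia.
move=> Hn.
have H' : forall m, i < m -> m < 2 * e+1+i -> f m.+1 = ~~ f m.
  move=> m im me; have [E|E] := eqVneq (f m) (f m.+1).
    by case: Hn; exists m.
  by move: E; case: (f m); case: (f m.+1).
case: e IH Hd H' {Hn} => [|[|e]] IH Hd H'.
- apply: (Hf i 1) => //; case=> [|[|]] //= _.
- case: i i0 Hi Hd H' => // i _ Hi Hd H'.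
  have a0 : f i = ~~ f (1 + i).
    have [E|E] := eqVneq (f i) (f (1+i)); last by move: E; case: (f i); case: (f (1+i)).
    by case: (Hf i 1) => //; case=> [|[|]] //= _.
  have a2 := H' (2 + i) ltac:(lia) ltac:(lia).
  have a3 := H' (3 + i) ltac:(lia) ltac:(lia).
  have a5 : f (6 + i) = ~~ f (5 + i).
    have [E|E] := eqVneq (f (5 + i)) (f (6+i)); last by move: E; case: (f (5 + i)); case: (f (6+i)).
    case: (Hf (4 + i) 1) => //; case=> [|[|]] //= _.
  change (f i = ~~ f i.+1) in a0; change (f i.+3 = ~~ f i.+2) in a2.
  change (f i.+4 = ~~ f i.+3) in a3; change (f i.+4.+2 = ~~ f i.+4.+1) in a5.
  change (f i.+4 = f i.+4.+1) in Hd.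
  case: (Hf i 3) => //; case=> [|[|[|[|]]]] //= _.
  + by change (f i = f i.+3); rewrite a0 a2 -Hi.
  + by change (f i.+1 = f i.+4); rewrite a3 a2 -Hi negbK.
  + by change (f i.+2 = f i.+4.+1); rewrite -Hd a3 a2 -Hi negbK.
  + by change (f i.+3 = f i.+4.+2); rewrite a5 -Hd a3 negbK.
- have a1 := H' (1 + i) ltac:(lia) ltac:(lia).
  have a2 := H' (2 + i) ltac:(lia) ltac:(lia).
  have a3 := H' (3 + i) ltac:(lia) ltac:(lia).
  have a4 := H' (4 + i) ltac:(lia) ltac:(lia).
  change (f i.+2 = ~~ f i.+1) in a1; change (f i.+3 = ~~ f i.+2) in a2.
  change (f i.+4 = ~~ f i.+3) in a3; change (f i.+4.+1 = ~~ f i.+4) in a4.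
  case: (Hf (1 + i) 2) => //; case=> [|[|[|]]] //= _.
  + by change (f i.+1 = f i.+3); rewrite a2 a1 negbK.
  + by change (f i.+2 = f i.+4); rewrite a3 a2 negbK.
  + by change (f i.+3 = f i.+4.+1); rewrite a4 a3 negbK.
Qed.

Lemma bneq (a b : bool) : a != b -> b = ~~ a.
Proof. by case: a; case: b. Qed.

Lemma decomp f : OF f -> exists s, forall m, f (s + 2 * m).+1 = ~~ f (s + 2 * m).
Proof.
move=> Hf.
case: (classic (exists i, 0 < i /\ f i = f i.+1)).
  move=> [i0 [i0p Hi0]].
  exists (if odd i0 then 2 else 1) => m.
  set t := _ + 2 * m.
  have [E|E] := eqVneq (f t) (f t.+1); last exact: bneq.
  have ot : odd t = ~~ odd i0 by rewrite /t oddD oddM /=; case: (odd i0).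
  have tp : 0 < t by rewrite /t; case: (odd i0).
  have [lt|lt|eq] := ltngtP i0 t.
  - have [b [Eb|Eb]] : exists b, t - i0 = 2 * b \/ t - i0 = 2 * b+1.
      by exists ((t - i0) %/ 2); lia.
    + by move: ot; rewrite -(subnK (ltnW lt)) Eb oddD oddM /=; case: (odd i0).
    + by exfalso; apply: (@parity f Hf b i0 i0p Hi0); rewrite -Eb subnK // ltnW.
  - have [b [Eb|Eb]] : exists b, i0 - t = 2 * b \/ i0 - t = 2 * b+1.
      by exists ((i0 - t) %/ 2); lia.
    + by move: ot; rewrite -(subnK (ltnW lt)) Eb oddD oddM /=; case: (odd t).
    + by exfalso; apply: (@parity f Hf b t tp E); rewrite -Eb subnK // ltnW.
  - by move: ot; rewrite eq; case: (odd t).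
move=> Hn; exists 1 => m.
have [E|E] := eqVneq (f (1 + 2 * m)) (f (1 + 2 * m).+1); last exact: bneq.
by case: Hn; exists (1 + 2 * m).
Qed.

Lemma transfer f s : OF f -> (forall m, f (s + 2 * m).+1 = ~~ f (s + 2 * m)) ->
  OF (fun m => f (s + 2 * m)).
Proof.
move=> Hf Hs i p p0 Hp; apply: (Hf (s + 2 * i) (2 * p)); first lia.
move=> k.
have [a [-> | ->]] : exists a, k = 2 * a \/ k = 2 * a + 1 by exists (k %/ 2); lia.
- move=> kp; have := Hp a _; rewrite /=.
  rewrite (_ : s + 2 * (a + i) = 2 * a + (s + 2 * i)); last lia.
  rewrite (_ : s + 2 * (a + p + i) = 2 * a + 2 * p + (s + 2 * i)); last lia.
  by apply; lia.
- move=> kp; have := Hp a _; rewrite /=.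
  rewrite (_ : 2 * a + 1 + (s + 2 * i) = (s + 2 * (a + i)).+1); last lia.
  rewrite (_ : 2 * a + 1 + 2 * p + (s + 2 * i) = (s + 2 * (a + p + i)).+1); last lia.
  by rewrite !Hs => ->; lia.
Qed.

Lemma exists_double f : OF f -> exists k, f k.+1 = f k.+2 /\ f k = ~~ f k.+1.
Proof.
move=> Hf.
case: (classic (exists i, 0 < i /\ f i = f i.+1)).
  move=> [[|i] [//= _ Hi]]; exists i; split => //.
  have [E|E] := eqVneq (f i) (f i.+1); last by move: E; case: (f i); case: (f i.+1).
  by case: (Hf i 1) => //; case=> [|[|]] //= _.
move=> Hn.
have H' : forall m, 0 < m -> f m.+1 = ~~ f m.
  move=> m m0; have [E|E] := eqVneq (f m) (f m.+1); last exact: bneq.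
  by case: Hn; exists m.
case: (Hf 1 2) => //; case=> [|[|[|]]] //= _.
+ by change (f 1 = f 3); rewrite (H' 2) // (H' 1) // negbK.
+ by change (f 2 = f 4); rewrite (H' 3) // (H' 2) // negbK.
+ by change (f 3 = f 5); rewrite (H' 4) // (H' 3) // negbK.
Qed.

Lemma sq_per (w : nat -> bool) P x : factor w P (2 * size x) = x ++ x ->
  forall k, k < size x -> w (P + k) = w (P + (size x + k)).
Proof.
move=> H k kp.
have h1 := congr1 (fun s => nth false s k) H.
have h2 := congr1 (fun s => nth false s (size x + k)) H.
move: h1 h2 => /=; rewrite /factor !nth_mkseq; try lia.
by rewrite !nth_cat kp ltnNge leq_addr /= addKn => -> ->.
Qed.

Lemma final w s j c : OF w -> (forall m, w (s + 2 * m).+1 = ~~ w (s + 2 * m)) ->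
  w (s + 2 * j) = c -> w (s + 2 * (j+1)) = c -> w (s + 2 * (j+2)) = ~~ c ->
  w (s + 2 * (j+3)) = c -> ~ square_at w (s + 2 * j).+1.
Proof.
move=> Hw Hs y0 y1 y2 y3 [x [xn Hx]].
have Hp := @sq_per _ _ _ Hx.
have p0 : 0 < size x by rewrite lt0n size_eq0.
move: Hp p0; move: (size x) => p Hp p0; clear Hx xn x.
move EP: (s + 2 * j).+1 => P in Hp *.
have [q [Eq|Eq]] : exists q, p = 2 * q \/ p = 2 * q + 1 by exists (p %/ 2); lia.
- apply: (Hw (s + 2 * j) p p0) => k.
  case: k => [|k] kp.
    have := Hp 0 p0.
    rewrite -EP (_ : (s + 2 * j).+1 + (p + 0) = (s + 2 * (j + q)).+1); last by clear -EP Eq; lia.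
    rewrite addn0 !Hs y0 => /(congr1 negb); rewrite !negbK => ->.
    congr (w _); clear -EP Eq; lia.
  have := Hp k kp.
  rewrite (_ : P + k = k.+1 + (s + 2 * j)); last by clear -EP Eq; lia.
  by rewrite (_ : P + (p + k) = k.+1 + p + (s + 2 * j)); [by [] | clear -EP Eq; lia].
- case: q Eq => [|[|q]] Eq.
  + have := Hp 0 p0; rewrite -EP Eq addn0 !Hs y0 (_ : (s + 2 * j).+1 + 1 = s + 2 * (j+1)); last by clear -EP Eq; lia.
    by rewrite y1; case: c {y0 y1 y2 y3}.
  + have := Hp 2 ltac:(clear -EP Eq; lia); rewrite -EP Eq.
    rewrite (_ : (s + 2 * j).+1 + 2 = (s + 2 * (j+1)).+1); last by clear -EP Eq; lia.
    rewrite (_ : (s + 2 * j).+1 + (2 * 1 + 1 + 2) = s + 2 * (j+3)); last by clear -EP Eq; lia.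
    by rewrite Hs y1 y3; case: c {y0 y1 y2 y3}.
  + have e0 := Hp 0 ltac:(clear -EP Eq; lia); have e1 := Hp 1 ltac:(clear -EP Eq; lia).
    have e2 := Hp 2 ltac:(clear -EP Eq; lia); have e3 := Hp 3 ltac:(clear -EP Eq; lia).
    have a1 : w (P + 1) = ~~ w (P + 0).
      rewrite e0 e1.
      rewrite -EP (_ : (s + 2 * j).+1 + (p + 1) = (s + 2 * (j + q + 3)).+1); last by clear -EP Eq; lia.
      by rewrite Hs (_ : (s + 2 * j).+1 + (p + 0) = s + 2 * (j + q + 3)); [by [] | clear -EP Eq; lia].
    have a3 : w (P + 3) = ~~ w (P + 2).
      rewrite e2 e3.
      rewrite -EP (_ : (s + 2 * j).+1 + (p + 3) = (s + 2 * (j + q + 4)).+1); last by clear -EP Eq; lia.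
      by rewrite Hs (_ : (s + 2 * j).+1 + (p + 2) = s + 2 * (j + q + 4)); [by [] | clear -EP Eq; lia].
    have a2 : w (P + 2) = ~~ w (P + 1).
      rewrite -EP (_ : (s + 2 * j).+1 + 2 = (s + 2 * (j + 1)).+1); last by clear -EP Eq; lia.
      by rewrite Hs (_ : (s + 2 * j).+1 + 1 = s + 2 * (j + 1)); [by [] | clear -EP Eq; lia].
    have a4 : w (P + 4) = ~~ w (P + 3).
      rewrite -EP (_ : (s + 2 * j).+1 + 4 = (s + 2 * (j + 2)).+1); last by clear -EP Eq; lia.
      by rewrite Hs (_ : (s + 2 * j).+1 + 3 = s + 2 * (j + 2)); [by [] | clear -EP Eq; lia].
    rewrite addn0 in a1.
    apply: (Hw P 2) => //; case=> [|[|[|]]] //= _.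
    * rewrite (_ : 0 + P = P + 0); last by rewrite addnC.
      rewrite (_ : 0 + 2 + P = P + 2); last by rewrite addnC.
      by rewrite addn0 a2 a1 negbK.
    * rewrite (_ : 1 + P = P + 1); last by rewrite addnC.
      rewrite (_ : 1 + 2 + P = P + 3); last by rewrite addnC.
      by rewrite a3 a2 negbK.
    * rewrite (_ : 2 + P = P + 2); last by rewrite addnC.
      rewrite (_ : 2 + 2 + P = P + 4); last by rewrite addnC.
      by rewrite a4 a3 negbK.
Qed.

Theorem theorem1 (w : nat -> bool) :
  overlap_free_inf w -> exists i : nat, ~ square_at w i.
Proof.
move=> /of_OF Hw.
have [s Hs] := @decomp _ Hw.
have Hy := @transfer _ _ Hw Hs.
have [s' Hs'] := @decomp _ Hy.
have Hz := @transfer _ _ Hy Hs'.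
have [k [Hk1 Hk0]] := @exists_double _ Hz.
move: Hk1 Hk0 => /= Hk1 Hk0.
exists (s + 2 * (s' + 2 * k).+1).+1.
apply: (@final w s _ (w (s + 2 * (s' + 2 * k.+1))) Hw Hs).
- by move: (Hs' k) => /= ->; rewrite Hk0 negbK.
- rewrite (_ : (s' + 2 * k).+1 + 1 = s' + 2 * k.+1); last by clear; lia.
  by [].
- rewrite (_ : (s' + 2 * k).+1 + 2 = (s' + 2 * k.+1).+1); last by clear; lia.
  by move: (Hs' k.+1) => /= ->.
- rewrite (_ : (s' + 2 * k).+1 + 3 = s' + 2 * k.+2); last by clear; lia.
  by rewrite -Hk1.
Qed.
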